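(* Let $0<\gamma<1/2$ and let $\ell\ge1$ be a fixed integer. There is a sequence $\varepsilon_n\to0$ with the following property. Let $n$ be given, let $\mathcal X\subset B(0,R_n)\setminus\mathring B(0,(1-\gamma)R_n)$ be any finite set, and form the graph on $\mathcal X$ joining two points iff their hyperbolic distance is at most $R_n$. If $y_1,y_2\in\mathcal X$ are joined by a path of length $\ell$ in this graph, then the angle $\theta_{12}$ between $y_1$ and $y_2$ as seen from the origin satisfies $$\theta_{12}\le(1+\varepsilon_n)\,2\ell\,e^{-\zeta(1-2\gamma)R_n/2}.$$
   Context: Fix an integer $d\ge2$ and $\zeta>0$. The Poincaré ball $B_d^{(\zeta)}$ is the open unit ball of $\mathbb R^d$ with metric $ds^2=\frac{4}{\zeta^2}\frac{|dx|^2}{(1-|x|^2)^2}$ and hyperbolic distance $d(\cdot,\cdot)$. $B(0,R)$ is the closed hyperbolic ball of radius $R$ about the origin, and $\mathring B$ its interior. $R_n\to\infty$ is a deterministic sequence. The angle between two points is the Euclidean angle between their position vectors. *)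

(* Defs.v *)
From Stdlib Require Import Reals Lra List.
Open Scope R_scope.

(* Points of R^d are represented as functions nat -> R; only the
   coordinates 0..d-1 are ever used. *)
Definition point := nat -> R.

Definition sumd (d : nat) (f : nat -> R) : R :=
  fold_right Rplus 0 (map f (seq 0 d)).

Definition dot (d : nat) (x y : point) : R := sumd d (fun i => x i * y i).
Definition norm2 (d : nat) (x : point) : R := dot d x x.
Definition enorm (d : nat) (x : point) : R := sqrt (norm2 d x).
Definition dist2 (d : nat) (x y : point) : R :=
  sumd d (fun i => (x i - y i) ^ 2).

Definition in_unit_ball (d : nat) (x : point) : Prop := norm2 d x < 1.

Definition arcosh (t : R) : R := ln (t + sqrt (t ^ 2 - 1)).

(* Hyperbolic distance in the Poincare ball B_d^(zeta), metric
   ds^2 = (4/zeta^2) |dx|^2 / (1-|x|^2)^2. *)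
Definition hdist (d : nat) (zeta : R) (x y : point) : R :=
  / zeta * arcosh (1 + 2 * dist2 d x y / ((1 - norm2 d x) * (1 - norm2 d y))).

Definition origin : point := fun _ => 0.

Definition hball (d : nat) (zeta R0 : R) (x : point) : Prop :=
  in_unit_ball d x /\ hdist d zeta origin x <= R0.

Definition hball_open (d : nat) (zeta R0 : R) (x : point) : Prop :=
  in_unit_ball d x /\ hdist d zeta origin x < R0.

Definition angle (d : nat) (x y : point) : R :=
  acos (dot d x y / (enorm d x * enorm d y)).

Definition adjacent (d : nat) (zeta Rn : R) (x y : point) : Prop :=
  x <> y /\ hdist d zeta x y <= Rn.

Fixpoint consec_adj (d : nat) (zeta Rn : R) (p : list point) : Prop :=
  match p with
  | x :: ((y :: _) as q) => adjacent d zeta Rn x y /\ consec_adj d zeta Rn q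
  | _ => True
  end.

Definition is_path (d : nat) (zeta Rn : R) (X : list point) (l : nat)
    (y1 y2 : point) (p : list point) : Prop :=
  length p = S l /\ NoDup p /\ (forall v, In v p -> In v X) /\
  hd y2 p = y1 /\ last p y1 = y2 /\ consec_adj d zeta Rn p.

(* Main.v *)
Require Import Defs.
From Stdlib Require Import Reals List Lra Psatz.
Open Scope R_scope.

Lemma sumd_lin3 d a b c f g h :
  sumd d (fun i => a * f i + b * g i + c * h i) = a * sumd d f + b * sumd d g + c * sumd d h.
Proof. unfold sumd; induction (seq 0 d) as [|k L IH]; simpl; [ring| rewrite IH; ring]. Qed.

Lemma sumd_ext d f g : (forall i, f i = g i) -> sumd d f = sumd d g.
Proof. intro H; unfold sumd; induction (seq 0 d) as [|k L IH]; simpl; [ring| rewrite IH, H; ring]. Qed.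

Lemma sumd_nonneg d f : (forall i, 0 <= f i) -> 0 <= sumd d f.
Proof. intro H; unfold sumd; induction (seq 0 d) as [|k L IH]; simpl; [lra| specialize (H k); lra]. Qed.

Lemma sumd_zero d : sumd d (fun _ => 0) = 0.
Proof. unfold sumd; induction (seq 0 d) as [|k L IH]; simpl; [ring| rewrite IH; ring]. Qed.

Lemma norm2_nonneg d x : 0 <= norm2 d x.
Proof. apply sumd_nonneg; intro i; cbv beta; nra. Qed.

Lemma dist2_nonneg d x y : 0 <= dist2 d x y.
Proof. apply sumd_nonneg; intro i; cbv beta. apply pow2_ge_0. Qed.

Lemma dist2_expand d x y : dist2 d x y = norm2 d x + norm2 d y - 2 * dot d x y.
Proof.
  unfold dist2, norm2, dot.
  rewrite (sumd_ext d _ (fun i => 1 * (x i * x i) + 1 * (y i * y i) + (-2) * (x i * y i)))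
    by (intro; ring).
  rewrite sumd_lin3; ring.
Qed.

Lemma dist2_origin d x : dist2 d origin x = norm2 d x.
Proof. unfold dist2, norm2, dot, origin; apply sumd_ext; intro; ring. Qed.

Lemma norm2_origin d : norm2 d origin = 0.
Proof. unfold norm2, dot, origin. transitivity (sumd d (fun _ => 0)); [apply sumd_ext; intro; ring | apply sumd_zero]. Qed.

Lemma dist2_self d x : dist2 d x x = 0.
Proof. unfold dist2. transitivity (sumd d (fun _ => 0)); [apply sumd_ext; intro; ring | apply sumd_zero]. Qed.

Lemma CS d x y : dot d x y ^ 2 <= norm2 d x * norm2 d y.
Proof.
  assert (Q : forall t, 0 <= norm2 d x - 2 * t * dot d x y + t ^ 2 * norm2 d y).
  { intro t.
    replace (norm2 d x - 2 * t * dot d x y + t ^ 2 * norm2 d y)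
      with (sumd d (fun i => 1 * (x i * x i) + (- 2 * t) * (x i * y i) + (t^2) * (y i * y i))).
    - apply sumd_nonneg; intro i; cbv beta; replace (1 * (x i * x i) + - 2 * t * (x i * y i) + t ^ 2 * (y i * y i)) with ((x i - t * y i)^2) by ring; apply pow2_ge_0.
    - rewrite sumd_lin3; unfold norm2, dot; ring. }
  pose proof (norm2_nonneg d x). pose proof (norm2_nonneg d y).
  destruct (Req_dec (norm2 d y) 0) as [Hy|Hy].
  - destruct (Req_dec (dot d x y) 0) as [P0|P0].
    + rewrite P0, Hy; lra.
    + specialize (Q ((norm2 d x + 1) / (2 * dot d x y))).
      rewrite Hy in Q. exfalso.
      replace (norm2 d x - 2 * ((norm2 d x + 1) / (2 * dot d x y)) * dot d x y +
        ((norm2 d x + 1) / (2 * dot d x y)) ^ 2 * 0) with (-1) in Q by (field; auto). lra.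
  - specialize (Q (dot d x y / norm2 d y)).
    assert (0 < norm2 d y) by lra.
    replace (norm2 d x - 2 * (dot d x y / norm2 d y) * dot d x y +
       (dot d x y / norm2 d y) ^ 2 * norm2 d y)
      with ((norm2 d x * norm2 d y - dot d x y ^ 2) / norm2 d y) in Q by (field; lra).
    assert (0 <= norm2 d x * norm2 d y - dot d x y ^ 2).
    { apply (Rmult_le_reg_r (/ norm2 d y)). apply Rinv_0_lt_compat; lra.
      rewrite Rmult_0_l. exact Q. }
    lra.
Qed.

Lemma CS2 d x y : dot d x y <= enorm d x * enorm d y.
Proof.
  unfold enorm. rewrite <- sqrt_mult by apply norm2_nonneg.
  apply Rle_trans with (Rabs (dot d x y)); [apply Rle_abs|].
  rewrite <- sqrt_Rsqr_abs. apply sqrt_le_1_alt. unfold Rsqr.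
  pose proof (CS d x y). lra.
Qed.

Lemma tri d x y z : sqrt (dist2 d x z) <= sqrt (dist2 d x y) + sqrt (dist2 d y z).
Proof.
  set (a := fun i => x i - y i). set (b := fun i => y i - z i).
  assert (E1 : dist2 d x y = norm2 d a) by (unfold a, norm2, dot, dist2; apply sumd_ext; intro; ring).
  assert (E2 : dist2 d y z = norm2 d b) by (unfold b, norm2, dot, dist2; apply sumd_ext; intro; ring).
  assert (E3 : dist2 d x z = norm2 d a + norm2 d b + 2 * dot d a b).
  { unfold a, b, norm2, dot, dist2.
    transitivity (sumd d (fun i => 1*((x i - y i)*(x i - y i)) + 1*((y i - z i)*(y i - z i)) + 2*((x i - y i)*(y i - z i))));
      [apply sumd_ext; intro; ring | rewrite sumd_lin3; ring]. }
  pose proof (CS2 d a b). unfold enorm in H. rewrite <- E1, <- E2 in H.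
  rewrite E3, <- E1, <- E2.
  pose proof (sqrt_pos (dist2 d x y)). pose proof (sqrt_pos (dist2 d y z)).
  rewrite <- (sqrt_square (sqrt (dist2 d x y) + sqrt (dist2 d y z))) by lra.
  apply sqrt_le_1_alt.
  pose proof (sqrt_sqrt _ (dist2_nonneg d x y)). pose proof (sqrt_sqrt _ (dist2_nonneg d y z)).
  nra.
Qed.

Lemma arcosh_pos a : 1 <= a -> 1 <= a + sqrt (a ^ 2 - 1).
Proof. intro; pose proof (sqrt_pos (a^2-1)); lra. Qed.

Lemma arcosh_le a b : 1 <= a -> arcosh a <= b -> 2 * a - 1 <= exp b.
Proof.
  intros Ha Hb. unfold arcosh in Hb.
  pose proof (arcosh_pos a Ha).
  assert (U : a + sqrt (a ^ 2 - 1) <= exp b).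
  { destruct (Rle_or_lt (a + sqrt (a ^ 2 - 1)) (exp b)) as [|Hlt]; auto.
    apply ln_increasing in Hlt; [|apply exp_pos]. rewrite ln_exp in Hlt. lra. }
  assert (a - 1 <= sqrt (a ^ 2 - 1)).
  { rewrite <- (sqrt_square (a - 1)) by lra. apply sqrt_le_1_alt. nra. }
  lra.
Qed.

Lemma arcosh_ge a b : 1 <= a -> b <= arcosh a -> exp b <= 2 * a.
Proof.
  intros Ha Hb. unfold arcosh in Hb.
  pose proof (arcosh_pos a Ha).
  assert (U : exp b <= a + sqrt (a ^ 2 - 1)).
  { rewrite <- (exp_ln (a + sqrt (a ^ 2 - 1))) by lra.
    destruct Hb as [Hb|Hb]; [left; apply exp_increasing; auto | rewrite Hb; lra]. }
  assert (sqrt (a ^ 2 - 1) <= a).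
  { rewrite <- (sqrt_square a) at 2 by lra. apply sqrt_le_1_alt. nra. }
  lra.
Qed.

Lemma annulus d zeta r0 x : 0 < zeta -> norm2 d x < 1 ->
  r0 <= hdist d zeta origin x -> 1 - norm2 d x <= 4 * exp (- (zeta * r0)).
Proof.
  intros Hz Hx Hr. unfold hdist in Hr.
  rewrite dist2_origin, norm2_origin in Hr.
  set (s := norm2 d x) in *. pose proof (norm2_nonneg d x). fold s in H.
  set (a := 1 + 2 * s / ((1 - 0) * (1 - s))) in *.
  assert (Ha : 1 <= a).
  { unfold a. assert (0 <= 2 * s / ((1 - 0) * (1 - s))).
    { apply Rmult_le_pos; [lra|]. left; apply Rinv_0_lt_compat; nra. } lra. }
  assert (zeta * r0 <= arcosh a).
  { apply (Rmult_le_compat_l zeta) in Hr; [|lra].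
    rewrite <- Rmult_assoc, Rinv_r, Rmult_1_l in Hr by lra. exact Hr. }
  pose proof (arcosh_ge a _ Ha H0).
  rewrite exp_Ropp.
  assert (a = (1 + s) / (1 - s)) by (unfold a; field; lra).
  rewrite H2 in H1.
  pose proof (exp_pos (zeta * r0)).
  apply (Rmult_le_reg_r (exp (zeta * r0))); auto.
  rewrite Rmult_assoc, Rinv_l by lra.
  apply Rmult_le_compat_l with (r := 1 - s) in H1; [|lra].
  replace ((1 - s) * (2 * ((1 + s) / (1 - s)))) with (2 * (1 + s)) in H1 by (field; lra).
  nra.
Qed.

Lemma adj_bound d zeta R0 x y delta : 0 < zeta ->
  norm2 d x < 1 -> norm2 d y < 1 ->
  1 - norm2 d x <= delta -> 1 - norm2 d y <= delta ->
  hdist d zeta x y <= R0 -> dist2 d x y <= exp (zeta * R0) * delta ^ 2 / 4.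
Proof.
  intros Hz Hx Hy Dx Dy Hr. unfold hdist in Hr.
  pose proof (norm2_nonneg d x). pose proof (norm2_nonneg d y).
  pose proof (dist2_nonneg d x y).
  set (s := norm2 d x) in *. set (t := norm2 d y) in *. set (D := dist2 d x y) in *.
  set (a := 1 + 2 * D / ((1 - s) * (1 - t))) in *.
  assert (Ha : 1 <= a).
  { unfold a. assert (0 <= 2 * D / ((1 - s) * (1 - t))).
    { apply Rmult_le_pos; [lra|]. left; apply Rinv_0_lt_compat; nra. } lra. }
  assert (arcosh a <= zeta * R0).
  { apply (Rmult_le_compat_l zeta) in Hr; [|lra].
    rewrite <- Rmult_assoc, Rinv_r, Rmult_1_l in Hr by lra. exact Hr. }
  pose proof (arcosh_le a _ Ha H2).
  unfold a in H3.
  assert (E : 2 * D <= (exp (zeta * R0) - 1) / 4 * ((1 - s) * (1 - t)) * 2).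
  { assert (0 < (1 - s) * (1 - t)) by nra.
    assert (2 * (2 * D / ((1 - s) * (1 - t))) <= exp (zeta * R0) - 1) by lra.
    apply Rmult_le_compat_l with (r := (1 - s) * (1 - t)) in H5; [|lra].
    replace ((1 - s) * (1 - t) * (2 * (2 * D / ((1 - s) * (1 - t))))) with (4 * D) in H5
      by (field; lra). lra. }
  pose proof (exp_pos (zeta * R0)).
  assert ((1 - s) * (1 - t) <= delta ^ 2) by nra.
  nra.
Qed.

Lemma path_bound d zeta R0 (P : point -> Prop) B :
  (forall x y, P x -> P y -> adjacent d zeta R0 x y -> sqrt (dist2 d x y) <= B) ->
  forall rest x e, P x -> (forall v, In v rest -> P v) -> consec_adj d zeta R0 (x :: rest) ->
  sqrt (dist2 d x (last (x :: rest) e)) <= INR (length rest) * B.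
Proof.
  intros HB rest. induction rest as [|y r IH]; intros x e Px Pr Hc.
  - simpl. rewrite dist2_self, sqrt_0. lra.
  - simpl in Hc. destruct Hc as [Ha Hc].
    change (last (x :: y :: r) e) with (last (y :: r) e).
    assert (Py : P y) by (apply Pr; left; auto).
    pose proof (IH y e Py (fun v Hv => Pr v (or_intror Hv)) Hc).
    pose proof (HB x y Px Py Ha).
    pose proof (tri d x y (last (y :: r) e)).
    replace (length (y :: r)) with (S (length r)) by reflexivity.
    rewrite S_INR. lra.
Qed.

Lemma sin_lb_ge u : 0 <= u -> u <= 2 -> u - u ^ 3 / 6 <= sin_lb u.
Proof.
  intros. replace (sin_lb u) with (u - u^3/6 + u^5/120 - u^7/5040).
  2:{ unfold sin_lb, sin_approx, sin_term. simpl sum_f_R0. simpl Factorial.fact. simpl INR. field. }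
  assert (0 <= u ^ 5 * (42 - u ^ 2)).
  { apply Rmult_le_pos. apply pow_le; auto. nra. }
  nra.
Qed.

Lemma angle_bound d y1 y2 delta D :
  0 <= delta -> delta <= 1/2 -> 0 <= D ->
  1 - delta <= norm2 d y1 -> norm2 d y1 < 1 ->
  1 - delta <= norm2 d y2 -> norm2 d y2 < 1 ->
  dist2 d y1 y2 <= D ^ 2 ->
  D ^ 2 / (2 * (1 - delta) ^ 2) <= 1/2 ->
  angle d y1 y2 * (1 - D ^ 2 / (2 * (1 - delta) ^ 2)) <= D / (1 - delta).
Proof.
  intros H0 H1 HD A1 B1 A2 B2 Hd Hc.
  set (c := D ^ 2 / (2 * (1 - delta) ^ 2)) in *.
  rewrite dist2_expand in Hd.
  pose proof (CS2 d y1 y2).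
  unfold angle, enorm in *.
  set (s1 := norm2 d y1) in *. set (s2 := norm2 d y2) in *. set (P := dot d y1 y2) in *.
  assert (E1 : sqrt s1 * sqrt s1 = s1) by (apply sqrt_sqrt; lra).
  assert (E2 : sqrt s2 * sqrt s2 = s2) by (apply sqrt_sqrt; lra).
  pose proof (sqrt_pos s1). pose proof (sqrt_pos s2).
  assert (G1 : s1 <= sqrt s1).
  { assert (sqrt s1 <= 1) by (rewrite <- sqrt_1; apply sqrt_le_1_alt; lra).
    assert (sqrt s1 * sqrt s1 <= sqrt s1 * 1) by (apply Rmult_le_compat_l; lra). lra. }
  assert (G2 : s2 <= sqrt s2).
  { assert (sqrt s2 <= 1) by (rewrite <- sqrt_1; apply sqrt_le_1_alt; lra).
    assert (sqrt s2 * sqrt s2 <= sqrt s2 * 1) by (apply Rmult_le_compat_l; lra). lra. }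
  set (m := sqrt s1 * sqrt s2) in *.
  assert (Hm : (1 - delta) ^ 2 <= m) by (unfold m; nra).
  assert (Hm0 : 1/4 <= m) by nra.
  assert (HP : 2 * m - D ^ 2 <= 2 * P).
  { pose proof (pow2_ge_0 (sqrt s1 - sqrt s2)).
    assert (Q : (sqrt s1 - sqrt s2)^2 = sqrt s1*sqrt s1 + sqrt s2*sqrt s2 - 2*(sqrt s1*sqrt s2)) by ring.
    unfold m. lra. }
  set (k := P / m).
  assert (Kle : k <= 1).
  { unfold k. apply (Rmult_le_reg_r m); [lra|]. unfold Rdiv. rewrite Rmult_assoc, Rinv_l; lra. }
  assert (Kge : 1 - c <= k).
  { unfold k, c. 
    assert (D ^ 2 / (2 * m) <= D ^ 2 / (2 * (1 - delta) ^ 2)).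
    { unfold Rdiv. apply Rmult_le_compat_l. nra. apply Rinv_le_contravar; nra. }
    assert (1 - D ^ 2 / (2 * m) <= P / m).
    { replace (1 - D ^ 2 / (2 * m)) with ((2 * m - D ^ 2) / 2 / m) by (field; lra).
      unfold Rdiv. apply Rmult_le_compat_r. left; apply Rinv_0_lt_compat; lra. lra. }
    lra. }
  assert (Hc0 : 0 <= c) by (unfold c; apply Rmult_le_pos; [nra | left; apply Rinv_0_lt_compat; nra]).
  set (th := acos k).
  assert (Hcos : cos th = k) by (apply cos_acos; lra).
  pose proof (acos_bound k) as Hb. fold th in Hb.
  pose proof PI_4.
  set (u := th / 2).
  assert (Hu : 0 <= u <= 2) by (unfold u; lra).
  assert (Hs : 2 * (sin u * sin u) <= c).
  { replace th with (2 * u) in Hcos by (unfold u; field). rewrite cos_2a_sin in Hcos. lra. }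
  assert (Hsl : u - u ^ 3 / 6 <= sin u).
  { apply Rle_trans with (sin_lb u). apply sin_lb_ge; lra. apply SIN; unfold u; lra. }
  assert (L0 : 0 <= u - u ^ 3 / 6) by nra.
  assert (L2 : (u - u ^ 3 / 6) ^ 2 <= c / 2) by nra.
  assert (U2 : u ^ 2 <= 6 * c).
  { assert (u - u ^ 3 / 6 = u * (1 - u ^ 2 / 6)) by field.
    assert (1/3 <= 1 - u ^ 2 / 6) by nra. nra. }
  assert (V : u * (1 - c) <= u - u ^ 3 / 6) by nra.
  assert (W : (th * (1 - c)) ^ 2 <= (D / (1 - delta)) ^ 2).
  { replace ((D / (1 - delta)) ^ 2) with (2 * c) by (unfold c; field; lra).
    replace th with (2 * u) by (unfold u; field). nra. }
  assert (0 <= th * (1 - c)) by nra.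
  assert (0 <= D / (1 - delta)) by (unfold Rdiv; apply Rmult_le_pos; [lra| left; apply Rinv_0_lt_compat; lra]).
  nra.
Qed.

Definition qf zeta gamma RR : R := exp (- zeta * (1 - 2 * gamma) * RR / 2).
Definition Df (l : nat) zeta gamma RR : R := 2 * INR l * qf zeta gamma RR.
Definition delf zeta gamma RR : R := 4 * exp (- (zeta * ((1 - gamma) * RR))).
Definition cf l zeta gamma RR : R :=
  Df l zeta gamma RR ^ 2 / (2 * (1 - delf zeta gamma RR) ^ 2).
Definition epsf l zeta gamma RR : R :=
  if Rle_dec (delf zeta gamma RR) (1/2) then
    if Rle_dec (cf l zeta gamma RR) (1/2) then
      / ((1 - delf zeta gamma RR) * (1 - cf l zeta gamma RR)) - 1
    else PI / Df l zeta gamma RR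
  else PI / Df l zeta gamma RR.

Lemma qsq zeta gamma RR : qf zeta gamma RR ^ 2 = exp (- (zeta * (1 - 2 * gamma) * RR)).
Proof. unfold qf. simpl. rewrite Rmult_1_r, <- exp_plus. f_equal. field. Qed.

Lemma exp_small a eta : 0 < a -> 0 < eta -> exists M, forall RR, M < RR -> exp (- (a * RR)) < eta.
Proof.
  intros Ha He. exists (/ (a * eta)). intros RR HR.
  assert (0 < / (a * eta)) by (apply Rinv_0_lt_compat; nra).
  rewrite exp_Ropp. pose proof (exp_ineq1_le (a * RR)).
  assert (a * / (a * eta) = / eta) by (field; lra).
  assert (/ eta < a * RR) by (rewrite <- H1; apply Rmult_lt_compat_l; auto).
  assert (/ eta < exp (a * RR)) by lra.
  pose proof (Rinv_0_lt_compat eta He).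
  rewrite <- (Rinv_inv eta). apply Rinv_lt_contravar; [nra|lra].
Qed.

Lemma epsf_small l zeta gamma RR eta : 0 < eta -> eta <= 1/2 ->
  delf zeta gamma RR < eta -> 2 * Df l zeta gamma RR ^ 2 < eta ->
  0 <= epsf l zeta gamma RR <= 8 * eta.
Proof.
  intros He He2 Hd Hc.
  assert (Hd0 : 0 <= delf zeta gamma RR) by (unfold delf; pose proof (exp_pos (- (zeta * ((1 - gamma) * RR)))); lra).
  set (dl := delf zeta gamma RR) in *.
  assert (Hc1 : cf l zeta gamma RR <= 2 * Df l zeta gamma RR ^ 2).
  { unfold cf. fold dl. unfold Rdiv. rewrite Rmult_comm. apply Rmult_le_compat_r. apply pow2_ge_0.
    rewrite <- (Rinv_inv 2) at 2. apply Rinv_le_contravar; nra. }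
  assert (Hc0 : 0 <= cf l zeta gamma RR).
  { unfold cf. apply Rmult_le_pos. apply pow2_ge_0. left; apply Rinv_0_lt_compat. fold dl; nra. }
  set (c := cf l zeta gamma RR) in *.
  unfold epsf. fold dl. fold c.
  destruct (Rle_dec dl (1/2)); [|lra].
  destruct (Rle_dec c (1/2)); [|lra].
  set (P := (1 - dl) * (1 - c)).
  assert (1/4 <= P <= 1) by (unfold P; nra).
  assert (1 - P <= dl + c) by (unfold P; nra).
  assert (1 <= / P).
  { rewrite <- Rinv_1. apply Rinv_le_contravar; lra. }
  assert (/ P <= 1 + 4 * (1 - P)).
  { apply (Rmult_le_reg_r P); [lra|]. rewrite Rinv_l by lra. nra. }
  lra.
Qed.

Theorem mainTheorem12 :
  forall (d : nat) (zeta gamma : R) (l : nat) (Rs : nat -> R),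
    (2 <= d)%nat -> 0 < zeta ->
    0 < gamma -> gamma < 1 / 2 -> (1 <= l)%nat ->
    cv_infty Rs ->
    exists eps : nat -> R,
      Un_cv eps 0 /\
      forall (n : nat) (X : list point),
        (forall x, In x X ->
           hball d zeta (Rs n) x /\ ~ hball_open d zeta ((1 - gamma) * Rs n) x) ->
        forall (y1 y2 : point) (p : list point),
          In y1 X -> In y2 X ->
          is_path d zeta (Rs n) X l y1 y2 p ->
          angle d y1 y2 <=
            (1 + eps n) * (2 * INR l) * exp (- zeta * (1 - 2 * gamma) * Rs n / 2).
Proof.
  intros d zeta gamma l Rs Hd Hz Hg1 Hg2 Hl Hinf.
  assert (Hl1 : 1 <= INR l) by (replace 1 with (INR 1) by reflexivity; apply le_INR; auto).
  exists (fun n => epsf l zeta gamma (Rs n)). split.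
  - intros e He.
    set (eta := Rmin (1/2) (e / 16)).
    assert (Heta : 0 < eta) by (unfold eta; apply Rmin_pos; lra).
    assert (Heta2 : eta <= 1/2) by (unfold eta; apply Rmin_l).
    assert (Heta3 : eta <= e / 16) by (unfold eta; apply Rmin_r).
    destruct (exp_small (zeta * (1 - gamma)) (eta / 4)) as [M1 HM1]; [nra|lra|].
    destruct (exp_small (zeta * (1 - 2 * gamma)) (eta / (8 * INR l ^ 2))) as [M2 HM2].
    { nra. }
    { apply Rdiv_lt_0_compat; [lra|nra]. }
    destruct (Hinf (Rmax M1 M2)) as [N HN]. exists N. intros n Hn.
    specialize (HN n Hn).
    assert (A1 : M1 < Rs n) by (eapply Rle_lt_trans; [apply Rmax_l|exact HN]).
    assert (A2 : M2 < Rs n) by (eapply Rle_lt_trans; [apply Rmax_r|exact HN]).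
    specialize (HM1 _ A1). specialize (HM2 _ A2).
    assert (B : 0 <= epsf l zeta gamma (Rs n) <= 8 * eta).
    { apply epsf_small; auto.
      - unfold delf. replace (zeta * ((1 - gamma) * Rs n)) with (zeta * (1 - gamma) * Rs n) by ring. lra.
      - unfold Df. replace ((2 * INR l * qf zeta gamma (Rs n)) ^ 2)
          with (4 * INR l ^ 2 * qf zeta gamma (Rs n) ^ 2) by ring.
        rewrite qsq.
        assert (0 < INR l ^ 2) by nra.
        apply (Rmult_lt_compat_l (8 * INR l ^ 2)) in HM2; [|nra].
        replace (8 * INR l ^ 2 * (eta / (8 * INR l ^ 2))) with eta in HM2 by (field; lra).
        lra. }
    unfold Rdist. rewrite Rminus_0_r, Rabs_right by lra. lra.
  - intros n X HX y1 y2 p Hy1 Hy2 Hp.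
    set (RR := Rs n) in *.
    set (dl := delf zeta gamma RR).
    set (q := qf zeta gamma RR).
    assert (Hq : 0 < q) by apply exp_pos.
    assert (Good : forall x, In x X -> norm2 d x < 1 /\ 1 - norm2 d x <= dl).
    { intros x Hx. destruct (HX x Hx) as [[H1 H2] H3]. split; auto.
      apply annulus; auto. apply Rnot_lt_le. intro Hlt. apply H3. split; auto. }
    assert (Adj : forall x y, In x X -> In y X -> adjacent d zeta RR x y ->
                  sqrt (dist2 d x y) <= 2 * q).
    { intros x y Hx Hy [_ Ha]. destruct (Good x Hx). destruct (Good y Hy).
      pose proof (adj_bound d zeta RR x y dl Hz H H1 H0 H2 Ha).
      assert (E : exp (zeta * RR) * dl ^ 2 / 4 = (2 * q) ^ 2).
      { replace ((2 * q) ^ 2) with (4 * q ^ 2) by ring. unfold q. rewrite qsq.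
        unfold dl, delf. 
        replace ((4 * exp (- (zeta * ((1 - gamma) * RR)))) ^ 2)
          with (16 * (exp (- (zeta * ((1 - gamma) * RR))) * exp (- (zeta * ((1 - gamma) * RR))))) by ring.
        rewrite <- exp_plus.
        replace (exp (zeta * RR) * (16 * exp (- (zeta * ((1 - gamma) * RR)) + - (zeta * ((1 - gamma) * RR)))) / 4)
          with (4 * (exp (zeta * RR) * exp (- (zeta * ((1 - gamma) * RR)) + - (zeta * ((1 - gamma) * RR))))) by field.
        rewrite <- exp_plus. f_equal. f_equal. ring. }
      rewrite E in H3. rewrite <- (sqrt_pow2 (2 * q)) by lra. apply sqrt_le_1_alt. exact H3. }
    destruct Hp as [Hlen [_ [Hin [Hhd [Hlast Hc]]]]].
    destruct p as [|a rest]; [discriminate|].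
    simpl in Hhd. subst a. simpl in Hlen. injection Hlen as Hlen.
    pose proof (path_bound d zeta RR (fun v => In v X) (2 * q) Adj rest y1 y1 Hy1
                  (fun v Hv => Hin v (or_intror Hv)) Hc) as PB.
    rewrite Hlast, Hlen in PB.
    set (D := Df l zeta gamma RR).
    assert (HD : 0 < D) by (unfold D, Df; fold q; nra).
    assert (RHS : (1 + epsf l zeta gamma RR) * (2 * INR l) * exp (- zeta * (1 - 2 * gamma) * RR / 2)
                  = (1 + epsf l zeta gamma RR) * D) by (unfold D, Df, qf; ring).
    rewrite RHS.
    assert (Hdist : dist2 d y1 y2 <= D ^ 2).
    { pose proof (sqrt_sqrt _ (dist2_nonneg d y1 y2)). pose proof (sqrt_pos (dist2 d y1 y2)).
      assert (sqrt (dist2 d y1 y2) <= D) by (unfold D, Df; fold q; lra).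
      simpl. nra. }
    pose proof (acos_bound (dot d y1 y2 / (enorm d y1 * enorm d y2))) as Hab.
    fold (angle d y1 y2) in Hab.
    unfold epsf. fold dl. fold D.
    assert (Bad : angle d y1 y2 <= (1 + PI / D) * D).
    { replace ((1 + PI / D) * D) with (D + PI) by (field; lra). lra. }
    destruct (Rle_dec dl (1/2)) as [G1|G1]; [|exact Bad].
    unfold cf. fold dl. fold D.
    destruct (Rle_dec (D ^ 2 / (2 * (1 - dl) ^ 2)) (1/2)) as [G2|G2]; [|exact Bad].
    assert (Hdl0 : 0 <= dl) by (unfold dl, delf; pose proof (exp_pos (- (zeta * ((1 - gamma) * RR)))); lra).
    destruct (Good y1 Hy1). destruct (Good y2 Hy2).
    pose proof (angle_bound d y1 y2 dl D Hdl0 G1 (Rlt_le _ _ HD) ltac:(lra) H ltac:(lra) H1 Hdist G2) as AB.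
    set (c := D ^ 2 / (2 * (1 - dl) ^ 2)) in *.
    assert (Hc0 : 0 <= c) by (unfold c; apply Rmult_le_pos; [nra | left; apply Rinv_0_lt_compat; nra]).
    replace ((1 + (/ ((1 - dl) * (1 - c)) - 1)) * D) with (D / (1 - dl) / (1 - c)) by (field; lra).
    apply (Rmult_le_reg_r (1 - c)); [lra|].
    replace (D / (1 - dl) / (1 - c) * (1 - c)) with (D / (1 - dl)) by (field; lra). exact AB.
Qed.
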